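(* Let $V$ be a finite totally ordered set and let $w$ be a derangement of $V$. Then the number $f(w)$ of simple graphs $G$ with vertex set $V$ such that $w \in \mathcal{D}(G)$ is $$f(w) = 2^{\binom{|V|}{2} - \sum_{t \in U(w)} |\rho_w(t)|} \cdot \prod_{t \in U(w)} \left(2^{|\rho_w(t)|} - 1\right) = 2^{\binom{|V|}{2}} \cdot \prod_{t \in U(w)} \left(1 - \frac{1}{2^{|\rho_w(t)|}}\right),$$ and consequently $r(w) = f(w)/2^{\binom{|V|}{2}} = \prod_{t \in U(w)} \left(1 - 2^{-|\rho_w(t)|}\right)$.
   Context: A derangement of $V$ is a fixed-point-free permutation of $V$. For a permutation $w$ of $V$ and $t \in V$, define $\rho_w(t) = \{t, w(t), \ldots, w^{k-1}(t)\}$, where $k$ is the smallest positive integer with $w^k(t) \le t$, and define $\lambda_w(t) = w^{-\ell}(t)$, where $\ell$ is the smallest positive integer with $w^{-\ell}(t) \le t$. For a simple graph $G$ with (totally ordered) vertex set $V$, the derangement set $\mathcal{D}(G)$ is the set of permutations $w$ of $V$ such that for every vertex $t$, the vertex $\lambda_w(t)$ is adjacent in $G$ to some vertex of $\rho_w(t)$. The frequency $f(w)$ is the number of simple graphs $G$ on vertex set $V$ with $w \in \mathcal{D}(G)$, and the rate is $r(w) = f(w)/2^{\binom{|V|}{2}}$. $U(w)$ denotes the set of elements of $V$ that are not the minimal element of their $w$-cycle. *)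

(* Defs.v *)
From HB Require Import structures.
From mathcomp Require Import all_boot all_order fingroup perm all_algebra.
Set Implicit Arguments. Unset Strict Implicit. Unset Printing Implicit Defensive.
Import Order.TTheory GRing.Theory Num.Theory.

Local Open Scope order_scope.

Section Derange.
Variables (d : Order.disp_t) (T : finOrderType d).

Definition derangement (w : {perm T}) : Prop := forall x : T, w x != x.

Lemma ex_return (w : {perm T}) (t : T) :
  exists k : nat, (0 < k)%N && ((w ^+ k)%g t <= t).
Proof.
exists #[w]%g; rewrite order_gt0 /= expg_order perm1; exact: lexx.
Qed.

Definition rho_len (w : {perm T}) (t : T) : nat := ex_minn (ex_return w t).

Definition rho (w : {perm T}) (t : T) : {set T} :=
  [set (w ^+ i)%g t | i : 'I_(rho_len w t)].

Definition lambda (w : {perm T}) (t : T) : T :=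
  ((w^-1)%g ^+ rho_len (w^-1)%g t)%g t.

Definition simple_graph (E : {set {set T}}) : bool :=
  [forall e in E, #|e| == 2%N].

Definition adj (E : {set {set T}}) (x y : T) : bool :=
  (x != y) && ([set x; y] \in E).

Definition inD (E : {set {set T}}) (w : {perm T}) : bool :=
  [forall t : T, [exists x in rho w t, adj E (lambda w t) x]].

Definition freq (w : {perm T}) : nat :=
  #|[set E : {set {set T}} | simple_graph E && inD E w]|.

Definition rate (w : {perm T}) : rat :=
  ((freq w)%:R / (2 ^ 'C(#|T|, 2))%:R)%R.

Definition Uset (w : {perm T}) : {set T} :=
  [set t | ~~ [forall x in porbit w t, t <= x]].

End Derange.

(* Main.v *)
Require Import Defs.
From HB Require Import structures.
From mathcomp Require Import all_boot all_order fingroup perm all_algebra.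
Set Implicit Arguments. Unset Strict Implicit. Unset Printing Implicit Defensive.
Import Order.TTheory GRing.Theory Num.Theory.
From mathcomp Require Import zify.
Section Count.
Variables (J X : finType) (S : J -> {set X}).

Definition hitset (I : {set J}) (P : {set X}) : {set {set X}} :=
  [set E : {set X} | (E \subset P) && [forall i in I, E :&: S i != set0]].

Lemma count_hit n : forall (I : {set J}) (P : {set X}), #|I| = n ->
  (forall i, i \in I -> S i \subset P) ->
  (forall i j, i \in I -> j \in I -> i != j -> [disjoint S i & S j]) ->
  \sum_(i in I) #|S i| <= #|P| /\
  #|hitset I P| = 2 ^ (#|P| - \sum_(i in I) #|S i|) * \prod_(i in I) (2 ^ #|S i| - 1).
Proof.
elim: n => [|n IH] I P cI sSP dS.
  have I0 : I = set0 by apply/eqP; rewrite -cards_eq0 cI.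
  subst I; rewrite !big_set0 subn0 muln1; split => //.
  rewrite -card_powerset; apply: eq_card => E; rewrite !inE.
  by case: (E \subset P) => //=; apply/forall_inP => i; rewrite inE.
have [i0 i0I] : exists i0, i0 \in I.
  by apply/set0Pn; rewrite -cards_eq0 cI.
set I' := I :\ i0; set P' := P :\: S i0.
have cI' : #|I'| = n by move: (cardsD1 i0 I); rewrite i0I cI add1n; case.
have sSP' : forall i, i \in I' -> S i \subset P'.
  move=> i; rewrite !inE => /andP[ii0 iI]; rewrite subsetD sSP //.
  by rewrite dS.
have dS' : forall i j, i \in I' -> j \in I' -> i != j -> [disjoint S i & S j].
  by move=> i j; rewrite !inE => /andP[_ iI] /andP[_ jI]; apply: dS.
have [leP' cardP'] := IH I' P' cI' sSP' dS'.
have eP : #|P| = #|S i0| + #|P'|.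
  by rewrite /P' cardsD (setIidPr (sSP _ i0I)) subnKC // subset_leq_card // sSP.
have eS : \sum_(i in I) #|S i| = #|S i0| + \sum_(i in I') #|S i|.
  rewrite (bigD1 i0) //=; congr (_ + _); apply: eq_bigl => i; by rewrite !inE andbC.
have eQ : \prod_(i in I) (2 ^ #|S i| - 1) = (2 ^ #|S i0| - 1) * \prod_(i in I') (2 ^ #|S i| - 1).
  rewrite (bigD1 i0) //=; congr (_ * _); apply: eq_bigl => i; by rewrite !inE andbC.
set Q := powerset (S i0) :\ set0.
have cQ : #|Q| = 2 ^ #|S i0| - 1.
  by move: (cardsD1 set0 (powerset (S i0))); rewrite card_powerset inE sub0set add1n => ->; rewrite subn1.
have disjP' : forall x, x \in P' -> x \notin S i0.
  by move=> x; rewrite inE => /andP[].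
have eH : hitset I P = (fun p : {set X} * {set X} => p.1 :|: p.2) @: setX Q (hitset I' P').
  apply/setP => E; apply/idP/idP.
    rewrite inE => /andP[EP /forall_inP HE].
    apply/imsetP; exists (E :&: S i0, E :\: S i0); last by rewrite /= setID.
    rewrite !inE /= subsetIr (HE _ i0I) /=.
    apply/andP; split.
      by rewrite setSD.
    apply/forall_inP => i; rewrite !inE => /andP[ii0 iI].
    have := HE _ iI; apply: contra => /eqP H0; apply/eqP/setP => x.
    move/setP/(_ x): H0; rewrite !inE.
    case xS : (x \in S i); rewrite ?andbT ?andbF //.
    have := dS _ _ iI i0I ii0 => /disjointFr /(_ xS) ->.
    by [].
  move=> /imsetP [[A B]]; rewrite /hitset !inE /= => /andP[/andP[An0 AS] /andP[BP' /forall_inP HB]] ->.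
  rewrite subUset (subset_trans AS (sSP _ i0I)) (subset_trans BP') ?subsetDl //=.
  apply/forall_inP => i iI; case: (eqVneq i i0) => [->|ii0].
    case/set0Pn: An0 => x xA; apply/set0Pn; exists x.
    by rewrite !inE xA (subsetP AS).
  have := HB i; rewrite !inE ii0 iI => /(_ isT) /set0Pn [x]; rewrite inE => /andP[xB xS].
  by apply/set0Pn; exists x; rewrite !inE xB xS orbT.
have inj : {in setX Q (hitset I' P') &, injective (fun p : {set X} * {set X} => p.1 :|: p.2)}.
  move=> [A B] [A' B']; rewrite !inE /= => /andP[/andP[_ AS] /andP[BP' _]] /andP[/andP[_ A'S] /andP[B'P' _]] E.
  have hA : forall (A B : {set X}), A \subset S i0 -> B \subset P' -> (A :|: B) :&: S i0 = A.
    move=> A1 B1 A1S B1P; apply/setP => x; rewrite !inE.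
    case xA: (x \in A1); first by rewrite (subsetP A1S).
    case xB: (x \in B1) => //=; by rewrite (negbTE (disjP' _ (subsetP B1P _ xB))).
  have hB : forall (A B : {set X}), A \subset S i0 -> B \subset P' -> (A :|: B) :\: S i0 = B.
    move=> A1 B1 A1S B1P; apply/setP => x; rewrite !inE.
    case xB: (x \in B1); first by rewrite (disjP' _ (subsetP B1P _ xB)) orbT.
    case xA: (x \in A1); rewrite /= ?andbF ?andbT //; by rewrite (subsetP A1S _ xA).
  by move: (hA A B AS BP') (hB A B AS BP'); rewrite E hA // hB // => -> ->.
rewrite eH card_in_imset // cardsX cQ cardP' eS eQ eP; split.
  by rewrite leq_add2l.
rewrite subnDl mulnCA.
done.
Qed.
End Count.
Section Perm.
Variables (d : Order.disp_t) (T : finOrderType d) (w : {perm T}).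

Lemma rho_lenP (s : {perm T}) t :
  [/\ 0 < rho_len s t, ((s ^+ rho_len s t)%g t <= t)%O &
      forall i, 0 < i < rho_len s t -> (t < (s ^+ i)%g t)%O].
Proof.
rewrite /rho_len; case: ex_minnP => m /andP[m0 le] mn; split => // i /andP[i0 im].
rewrite ltNge; apply/negP => H.
by have := mn i; rewrite i0 H => /(_ isT); rewrite leqNgt im.
Qed.

Lemma rho_len_min (s : {perm T}) t i : 0 < i -> ((s ^+ i)%g t <= t)%O -> rho_len s t <= i.
Proof.
by move=> i0 H; rewrite /rho_len; case: ex_minnP => m _ mn; apply: mn; rewrite i0 H.
Qed.

Lemma exp_mod (s : {perm T}) x l j : (s ^+ l)%g x = x -> (s ^+ j)%g x = (s ^+ (j %% l))%g x.
Proof.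
move=> H; rewrite {1}(divn_eq j l) expgD permM mulnC expgM.
congr ((s ^+ _)%g _); elim: (j %/ l) => [|q IH]; first by rewrite expg0 perm1.
by rewrite expgS permM H IH.
Qed.

Lemma Vexp_le (s : {perm T}) x i j : i <= j -> ((s^-1) ^+ i)%g ((s ^+ j)%g x) = (s ^+ (j - i))%g x.
Proof.
move=> ij; rewrite -{1}(subnK ij) expgD permM expVgn permK //.
Qed.

Lemma Vexp_ge (s : {perm T}) x i j : j <= i -> ((s^-1) ^+ i)%g ((s ^+ j)%g x) = ((s^-1) ^+ (i - j))%g x.
Proof.
move=> ji; rewrite -{1}(subnK ji) addnC expgD permM (expVgn s j) permK //.
Qed.

Lemma in_rho t x : reflect (exists2 i, i < rho_len w t & x = (w ^+ i)%g t) (x \in rho w t).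
Proof.
apply: (iffP imsetP) => [[i _ ->]|[i ilt ->]]; first by exists i.
by exists (Ordinal ilt).
Qed.

Lemma notU_min t : t \notin Uset w -> forall y, y \in porbit w t -> (t <= y)%O.
Proof. by rewrite inE negbK => /forall_inP. Qed.

Lemma U_lt t : t \in Uset w -> (lambda w t < t)%O.
Proof.
move=> tU; have [l0 lle lgt] := rho_lenP (w^-1)%g t.
rewrite /lambda lt_neqAle lle andbT; apply/eqP => E.
move: tU; rewrite inE => /negP; apply; apply/forall_inP => y.
rewrite -porbitV => /porbitP [j ->].
rewrite (exp_mod _ E); set r := j %% _.
have : r < rho_len (w^-1)%g t by rewrite ltn_mod.
case: (posnP r) => [-> _|r0 rl]; first by rewrite expg0 perm1.
by apply/ltW/lgt; rewrite r0.
Qed.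

Lemma U_rho t x : x \in rho w t -> (t <= x)%O.
Proof.
case/in_rho => i il ->; have [_ _ H] := rho_lenP w t.
case: (posnP i) => [->|i0]; first by rewrite expg0 perm1.
by apply/ltW/H; rewrite i0.
Qed.

Lemma notU_lambda t : t \notin Uset w -> lambda w t = t.
Proof.
move=> tU; have [_ lle _] := rho_lenP (w^-1)%g t.
apply/le_anti; rewrite lle /=; apply: notU_min => //.
by rewrite -porbitV mem_porbit.
Qed.

Lemma notU_succ t : derangement w -> t \notin Uset w ->
  [/\ w t \in Uset w, lambda w (w t) = t &
      forall x, x \in rho w (w t) -> x \in rho w t].
Proof.
move=> der tU; have tle : (t <= w t)%O.
  by apply: notU_min => //; rewrite -{1}(expg1 w) mem_porbit.
have tlt : (t < w t)%O by rewrite lt_neqAle tle andbT eq_sym der.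
split.
- rewrite inE; apply/forall_inP => /(_ t) H.
  have : (w t <= t)%O by apply: H; rewrite porbit_sym -{1}(expg1 w) mem_porbit.
  by rewrite leNgt tlt.
- have r1 : rho_len (w^-1)%g (w t) = 1.
    apply/eqP; rewrite eqn_leq; have [-> _ _] := rho_lenP (w^-1)%g (w t).
    by rewrite andbT rho_len_min // expg1 permK ltW.
  by rewrite /lambda r1 expg1 permK.
- have [k0 kle _] := rho_lenP w t.
  have E : (w ^+ rho_len w t)%g t = t.
    by apply/le_anti; rewrite kle /=; apply: notU_min => //; rewrite mem_porbit.
  move=> x /in_rho [i _ ->]; rewrite -(permM w (w ^+ i)%g t) -expgS (exp_mod i.+1 E).
  apply/in_rho; exists (i.+1 %% rho_len w t); [exact: ltn_pmod | reflexivity].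
Qed.

Lemma back_path t b : t \in Uset w -> b \in rho w t ->
  exists q, [/\ q < rho_len w t, b = (w ^+ q)%g t,
    forall i, i < q + rho_len (w^-1)%g t -> (t <= ((w^-1) ^+ i)%g b)%O &
    ((w^-1) ^+ (q + rho_len (w^-1)%g t))%g b = lambda w t].
Proof.
move=> tU /in_rho [q qk ->]; exists q; split; [exact: qk | reflexivity | |].
  move=> i iql; have [_ _ H1] := rho_lenP w t; have [_ _ H2] := rho_lenP (w^-1)%g t.
  case: (leqP i q) => iq.
    rewrite (Vexp_le _ _ iq); case: (posnP (q - i)) => [->|p]; first by rewrite expg0 perm1.
    apply/ltW/H1; rewrite p /=; exact: (leq_ltn_trans (leq_subr _ _) qk).
  rewrite (Vexp_ge _ _ (ltnW iq)); apply/ltW/H2; rewrite subn_gt0 iq /=.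
  by rewrite ltn_subLR; [exact: iql | exact: ltnW].
by rewrite (Vexp_ge _ _ (leq_addr _ _)) addKn.
Qed.

Lemma U_inj t1 t2 b : t1 \in Uset w -> t2 \in Uset w ->
  b \in rho w t1 -> b \in rho w t2 -> lambda w t1 = lambda w t2 -> t1 = t2.
Proof.
move=> U1 U2 b1 b2 el.
have [q1 [q1k eb1 H1 E1]] := back_path U1 b1.
have [q2 [q2k eb2 H2 E2]] := back_path U2 b2.
have a1 := U_lt U1; have a2 := U_lt U2.
have [l10 _ _] := rho_lenP (w^-1)%g t1; have [l20 _ _] := rho_lenP (w^-1)%g t2.
move: H1 E1 H2 E2.
set m1 := q1 + _; set m2 := q2 + _ => H1 E1 H2 E2.
have em : m1 = m2.
  case: (ltngtP m1 m2) => h; last exact: h.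
    by have := H2 _ h; rewrite E1 el leNgt a2.
  by have := H1 _ h; rewrite E2 -el leNgt a1.
apply/le_anti/andP; split.
  have := H1 q2; rewrite em eb2 (Vexp_le _ _ (leqnn q2)) subnn expg0 perm1; apply.
  by rewrite /m2 -addn1 leq_add2l.
have := H2 q1; rewrite -em eb1 (Vexp_le _ _ (leqnn q1)) subnn expg0 perm1; apply.
by rewrite /m1 -addn1 leq_add2l.
Qed.

End Perm.

Section Main.
Variables (d : Order.disp_t) (T : finOrderType d) (w : {perm T}).
Hypothesis der : derangement w.

Definition Sfam (t : T) : {set {set T}} := [set [set lambda w t; x] | x in rho w t].
Definition Pairs : {set {set T}} := [set A : {set T} | #|A| == 2].

Lemma lam_neq t x : t \in Uset w -> x \in rho w t -> lambda w t != x.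
Proof.
move=> tU xr; rewrite lt_eqF //; exact: (lt_le_trans (U_lt tU) (U_rho xr)).
Qed.

Lemma hit_iff (E : {set {set T}}) t : t \in Uset w ->
  [exists x in rho w t, adj E (lambda w t) x] = (E :&: Sfam t != set0).
Proof.
move=> tU; apply/exists_inP/set0Pn.
  move=> [x xr /andP[_ xE]]; exists [set lambda w t; x].
  by rewrite inE xE; apply/imsetP; exists x.
move=> [e]; rewrite inE => /andP[eE /imsetP [x xr ex]]; exists x => //.
by rewrite /adj lam_neq // -ex eE.
Qed.

Lemma inD_iff (E : {set {set T}}) :
  inD E w = [forall t in Uset w, E :&: Sfam t != set0].
Proof.
apply/forallP/forall_inP => H t.
  by move=> tU; rewrite -hit_iff //; exact: H.
case tU : (t \in Uset w); first by rewrite hit_iff //; apply: H.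
have [wtU lwt sub] := notU_succ der (negbT tU).
have := H _ wtU; rewrite -hit_iff // => /exists_inP [x xr].
rewrite lwt => Ha; apply/exists_inP; exists x; first exact: sub.
by rewrite notU_lambda ?tU.
Qed.

Lemma simple_iff (E : {set {set T}}) : simple_graph E = (E \subset Pairs).
Proof.
apply/forall_inP/subsetP => H e eE; first by rewrite inE H.
by have := H e eE; rewrite inE.
Qed.

Lemma card_Sfam t : #|Sfam t| = #|rho w t|.
Proof.
apply: card_imset => x y exy.
have : y \in [set lambda w t; x] by rewrite exy !inE eqxx orbT.
case/set2P => [ey|]; last by move=> ->.
have : x \in [set lambda w t; y] by rewrite -exy !inE eqxx orbT.
by rewrite -ey setUid inE => /eqP.
Qed.

Lemma count_main :
  \sum_(t in Uset w) #|rho w t| <= 'C(#|T|, 2) /\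
  freq w = 2 ^ ('C(#|T|, 2) - \sum_(t in Uset w) #|rho w t|)
                 * \prod_(t in Uset w) (2 ^ #|rho w t| - 1).
Proof.
have sSP : forall t, t \in Uset w -> Sfam t \subset Pairs.
  move=> t tU; apply/subsetP => e /imsetP [x xr ->].
  by rewrite inE cards2 lam_neq.
have dS : forall i j, i \in Uset w -> j \in Uset w -> i != j -> [disjoint Sfam i & Sfam j].
  move=> i j iU jU ij; rewrite -setI_eq0; apply/eqP/setP => e; rewrite !inE.
  apply/negP => /andP[/imsetP [x xr ->] /imsetP [y yr]].
  have ai := U_lt iU; have aj := U_lt jU.
  have xi := U_rho xr; have yj := U_rho yr.
  move=> exy.
  have hl : lambda w i = lambda w j.
    have : lambda w i \in [set lambda w j; y] by rewrite -exy !inE eqxx.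
    case/set2P => // liy.
    have : lambda w j \in [set lambda w i; x] by rewrite exy !inE eqxx.
    case/set2P => ljx.
      by have := lt_le_trans aj yj; rewrite ljx liy ltxx.
    have h1 := lt_le_trans ai xi; have h2 := lt_le_trans aj yj.
    rewrite liy in h1; rewrite ljx in h2.
    by have := lt_trans h1 h2; rewrite ltxx.
  have hx : x = y.
    have : x \in [set lambda w j; y] by rewrite -exy !inE eqxx orbT.
    case/set2P => // xl.
    by move: (lt_le_trans ai xi); rewrite xl -hl ltxx.
  by move/eqP: ij; apply; apply: (U_inj iU jU xr); rewrite ?hx.
have [le ceq] := @count_hit _ _ Sfam _ (Uset w) Pairs (erefl _) sSP dS.
have cP : #|Pairs| = 'C(#|T|, 2) by rewrite card_draws.
have eS : \sum_(t in Uset w) #|Sfam t| = \sum_(t in Uset w) #|rho w t|.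
  by apply: eq_bigr => t _; rewrite card_Sfam.
have eQ : \prod_(t in Uset w) (2 ^ #|Sfam t| - 1) = \prod_(t in Uset w) (2 ^ #|rho w t| - 1).
  by apply: eq_bigr => t _; rewrite card_Sfam.
rewrite -cP -eS -eQ; split => //.
rewrite -ceq /freq; apply: eq_card => E; rewrite /hitset !inE simple_iff inD_iff.
done.
Qed.

End Main.

Theorem theorem3p5 (d : Order.disp_t) (T : finOrderType d) (w : {perm T}) :
  derangement w ->
  [/\ freq w = (2 ^ ('C(#|T|, 2) - \sum_(t in Uset w) #|rho w t|)
                 * \prod_(t in Uset w) (2 ^ #|rho w t| - 1))%N,
      ((freq w)%:R = (2 ^ 'C(#|T|, 2))%:R
                 * \prod_(t in Uset w) (1 - 1 / (2 ^ #|rho w t|)%:R) :> rat)%R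
    & rate w = (\prod_(t in Uset w) (1 - 1 / (2 ^ #|rho w t|)%:R))%R].
Proof.
move=> der; have [le feq] := count_main der.
have nz : forall n, ((2 ^ n)%:R : rat) != 0%R.
  by move=> n; rewrite pnatr_eq0 expn_eq0.
have key : ((freq w)%:R = (2 ^ 'C(#|T|, 2))%:R
                 * \prod_(t in Uset w) (1 - 1 / (2 ^ #|rho w t|)%:R) :> rat)%R.
  have e1 : forall t, (1 - 1 / (2 ^ #|rho w t|)%:R : rat)%R
                     = ((2 ^ #|rho w t| - 1)%:R / (2 ^ #|rho w t|)%:R)%R.
    move=> t; rewrite natrB ?expn_gt0 // mulr1n mulrBl divff ?nz //.
  rewrite (eq_bigr _ (fun t _ => e1 t)) prodf_div -!natr_prod -expn_sum.
  rewrite feq natrM -{2}(subnK le) expnD natrM -mulrA; congr (_ * _)%R.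
  by rewrite [((2 ^ _)%:R * _)%R]mulrC divfK ?nz.
split; [exact: feq | exact: key |].
by rewrite /rate key mulrC mulKf ?nz.
Qed.
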